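(* Let $r\ge 1$ and $l\ge 0$ be integers, let $n$ be a positive integer and let $x$ be a real number. Then \[ \sum_{1\le i_1\le i_2\le\cdots\le i_r\le n}(x+i_1)_l=\frac{(x+n+r)_{l+r}}{(l+r)_r}-\sum_{i=1}^r\binom{n+r-i-1}{r-i}\frac{(x+i)_{l+i}}{(l+i)_i}. \]
   Context: $(y)_k=y(y-1)\cdots(y-k+1)$ denotes the lower (falling) factorial, with $(y)_0=1$. The left-hand side is the $r$-fold sum ${\sum}^r (x+n)_l$, where for a function $f$ one sets ${\sum}^0 f(n)=f(n)$ and ${\sum}^r f(n)={\sum}^{r-1}f(1)+\cdots+{\sum}^{r-1}f(n)$. *)

(* Defs.v *)
From mathcomp Require Import all_boot all_order all_algebra.
From mathcomp Require Import reals.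
Set Implicit Arguments. Unset Strict Implicit. Unset Printing Implicit Defensive.
Import Order.TTheory GRing.Theory Num.Theory.
Local Open Scope ring_scope.

Definition ffact {R : ringType} (y : R) (k : nat) : R :=
  \prod_(i < k) (y - i%:R).

Fixpoint rsum {R : ringType} (r : nat) (f : nat -> R) (n : nat) : R :=
  match r with
  | 0 => f n
  | r'.+1 => \sum_(1 <= j < n.+1) rsum r' f j
  end.

(* Main.v *)
Require Import Defs.
From mathcomp Require Import all_boot all_order all_algebra.
From mathcomp Require Import reals.
From mathcomp Require Import ring zify.
Import Order.TTheory GRing.Theory Num.Theory.
Local Open Scope ring_scope.

Lemma hockey (n k : nat) :
  (\sum_(1 <= j < n.+1) 'C(j.-1 + k, k) = 'C(n + k, k.+1))%N.
Proof.
elim: n => [|n IH]; first by rewrite big_geq // bin_small.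
by rewrite big_nat_recr //= IH addSn binS addnC.
Qed.

Lemma ffactS_l {R : ringType} (y : R) k :
  ffact y k.+1 = y * ffact (y - 1) k.
Proof.
rewrite /ffact big_ord_recl /= mulr0n subr0; apply: congr1.
by apply: eq_bigr => i _; rewrite /bump /= natrD opprD addrA.
Qed.

Lemma ffactS_r {R : ringType} (y : R) k :
  ffact y k.+1 = ffact y k * (y - k%:R).
Proof. by rewrite /ffact big_ord_recr. Qed.

Lemma ffact_diff {R : comRingType} (y : R) k :
  ffact (y + 1) k.+1 - ffact y k.+1 = k.+1%:R * ffact y k.
Proof.
have e : y + 1 - (y - k%:R) = k.+1%:R.
  by rewrite -natr1; ring.
rewrite ffactS_l addrK ffactS_r -e; ring.
Qed.

Lemma telesc {R : comRingType} (c : R) k n :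
  k.+1%:R * \sum_(1 <= j < n.+1) ffact (c + j%:R) k =
  ffact (c + n%:R + 1) k.+1 - ffact (c + 1) k.+1.
Proof.
elim: n => [|n IH]; first by rewrite big_geq // mulr0 addr0 subrr.
rewrite big_nat_recr //= mulrDr IH -ffact_diff.
rewrite -natr1 !addrA; ring.
Qed.

Lemma ffact_nat_neq0 (R : realType) (m r : nat) :
  (r <= m)%N -> ffact (m%:R : R) r != 0.
Proof.
move=> rm; rewrite /ffact; apply/prodf_neq0 => i _.
have le : (i <= m)%N by apply: leq_trans (ltnW (ltn_ord i)) rm.
rewrite -natrB // pnatr_eq0 subn_eq0 -ltnNge.
by apply: leq_trans (ltn_ord i) rm.
Qed.

Lemma ffact_den (R : realType) (l r : nat) :
  ffact ((l + r.+1)%:R : R) r.+1 = (l + r).+1%:R * ffact ((l + r)%:R) r.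
Proof.
by rewrite ffactS_l addnS -natr1 addrK.
Qed.

Lemma main_gen (R : realType) (l : nat) (x : R) r : forall n : nat,
  rsum r (fun m => ffact (x + m%:R) l) n =
    ffact (x + n%:R + r%:R) (l + r) / ffact ((l + r)%:R) r
    - \sum_(1 <= i < r.+1)
        ('C(n + r - i - 1, r - i))%:R * (ffact (x + i%:R) (l + i) / ffact ((l + i)%:R) i).
Proof.
elim: r => [|r IH] n.
  by rewrite /= big_geq // subr0 !addn0 addr0 /ffact big_ord0 divr1.
rewrite /= (eq_bigr _ (fun j _ => IH j)) sumrB.
set D := ffact ((l + r)%:R : R) r.
set K := ((l + r).+1)%:R : R.
have DK : ffact ((l + r.+1)%:R : R) r.+1 = K * D by rewrite ffact_den.
have Dn0 : D != 0 by apply: ffact_nat_neq0; apply: leq_addl.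
have Kn0 : K != 0 by rewrite pnatr_eq0.
have S1 : \sum_(1 <= j < n.+1) ffact (x + j%:R + r%:R) (l + r) / D =
   (ffact (x + r%:R + n%:R + 1) (l + r).+1 - ffact (x + r%:R + 1) (l + r).+1) / (K * D).
  rewrite -mulr_suml -telesc.
  rewrite (eq_bigr (fun j => ffact (x + r%:R + j%:R) (l + r))); last first.
    by move=> j _; rewrite addrAC.
  rewrite -/K; field; rewrite Dn0 /=; have -> : 1 + (l%:R + r%:R) = K :> R by rewrite /K -natr1 natrD addrC.
  by [].
have S2 : \sum_(1 <= j < n.+1) \sum_(1 <= i < r.+1)
      'C(j + r - i - 1, r - i)%:R * (ffact (x + i%:R) (l + i) / ffact ((l + i)%:R) i) =
    \sum_(1 <= i < r.+1) 'C(n + r.+1 - i - 1, r.+1 - i)%:R * (ffact (x + i%:R) (l + i) / ffact ((l + i)%:R) i).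
  rewrite exchange_big /=; apply: eq_big_nat => i /andP [i1 ir].
  rewrite -mulr_suml -natr_sum; congr (_%:R * _).
  have -> : ('C(n + r.+1 - i - 1, r.+1 - i) = 'C(n + (r - i), (r - i).+1))%N.
    by congr binomial; lia.
  rewrite -hockey; apply: eq_big_nat => j /andP [j1 jn]; congr binomial; lia.
rewrite S1 S2 [in RHS]big_nat_recr //= subnn bin0 DK -/D mul1r.
have e1 : x + n%:R + r.+1%:R = x + r%:R + n%:R + 1 by rewrite -natr1; ring.
have e2 : x + r.+1%:R = x + r%:R + 1 by rewrite -natr1 addrA.
rewrite e1 e2 (addnS l r); ring.
Qed.

Theorem mainTheorem2 (R : realType) (r l n : nat) (x : R) :
  (1 <= r)%N -> (0 < n)%N ->
  rsum r (fun m => ffact (x + m%:R) l) n =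
    ffact (x + n%:R + r%:R) (l + r) / ffact ((l + r)%:R) r
    - \sum_(1 <= i < r.+1)
        ('C(n + r - i - 1, r - i))%:R * (ffact (x + i%:R) (l + i) / ffact ((l + i)%:R) i).
Proof. by move=> _ _; apply: main_gen. Qed.
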